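(* Let $p, n_s, q$ be positive integers, and let $\mathbf{Y} \in \mathbb{R}^{p \times q}$, $\mathbf{Z} \in \mathbb{R}^{n_s \times q}$. Suppose the pair $(\mathbf{B}, \mathbf{D})$ with $\mathbf{B} \in \mathbb{R}^{p \times n_s}$, $\mathbf{D} \in \mathbb{R}^{p \times p}$ satisfies $$(\mathbf{I} - \mathbf{D})\mathbf{Y} = \mathbf{B}\mathbf{Z}, \qquad (\mathbf{B}~\mathbf{D})\mathbf{1} = \mathbf{1}, \qquad \mathbf{B} \geq \mathbf{0},~ \mathbf{D} \geq \mathbf{0}$$ (such a pair exists when $\mathbf{Y},\mathbf{Z}$ are noiseless steady-state data generated by a true pair $(\overline{\mathbf B},\overline{\mathbf D})$, namely that pair itself). Let $\boldsymbol{\Lambda} \in \mathbb{R}^{p\times p}$ be any non-negative diagonal matrix, and define $(\mathbf{B}', \mathbf{D}')$ by $$\mathbf{B}' = \boldsymbol{\Lambda}\mathbf{B}, \qquad \mathrm{off}(\mathbf{D}') = \boldsymbol{\Lambda}\,\mathrm{off}(\mathbf{D}), \qquad \mathrm{diag}(\mathbf{D}') = \mathbf{1} - \boldsymbol{\Lambda}\big(\mathbf{B}\mathbf{1} + \mathrm{off}(\mathbf{D})\mathbf{1}\big),$$ and assume $\boldsymbol{\Lambda}$ is such that $\mathrm{diag}(\mathbf{D}') \geq \mathbf{0}$. Then $(\mathbf{B}', \mathbf{D}')$ also satisfies $(\mathbf{I} - \mathbf{D}')\mathbf{Y} = \mathbf{B}'\mathbf{Z}$, $(\mathbf{B}'~\mathbf{D}')\mathbf{1}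 = \mathbf{1}$, $\mathbf{B}' \geq \mathbf{0}$, $\mathbf{D}' \geq \mathbf{0}$.
   Context: $\mathbf{1}$ denotes the all-ones vector of appropriate dimension; inequalities between matrices are entrywise. For a square matrix $\mathbf{D}$, $\mathrm{off}(\mathbf{D})$ denotes the square matrix obtained from $\mathbf{D}$ by setting its diagonal entries to zero, and $\mathrm{diag}(\mathbf{D})$ denotes the vector of its diagonal entries. $(\mathbf{B}~\mathbf{D})$ denotes the horizontal concatenation of $\mathbf{B}$ and $\mathbf{D}$. *)

(* Defs.v *)
From mathcomp Require Import all_boot all_order all_algebra.
Set Implicit Arguments. Unset Strict Implicit. Unset Printing Implicit Defensive.
Import Order.TTheory GRing.Theory Num.Theory.
Local Open Scope ring_scope.

Definition ones (R : pzRingType) (n : nat) : 'cV[R]_n := const_mx 1.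

Definition mx_nonneg (R : numDomainType) (m n : nat) (A : 'M[R]_(m, n)) : Prop :=
  forall i j, 0 <= A i j.

Definition offd (R : pzRingType) (n : nat) (D : 'M[R]_n) : 'M[R]_n :=
  \matrix_(i, j) (if i == j then 0 else D i j).

Definition diagv (R : pzRingType) (n : nat) (D : 'M[R]_n) : 'cV[R]_n :=
  \col_i D i i.

(* Main.v *)
Require Import Defs.
From mathcomp Require Import all_boot all_order all_algebra.
From mathcomp Require Import ring.
Import Order.TTheory GRing.Theory Num.Theory.
Local Open Scope ring_scope.

Lemma diag_mulE (R : realFieldType) (p m : nat) (L : 'M[R]_p) (M : 'M[R]_(p, m)) i j :
  is_diag_mx L -> (L *m M) i j = L i i * M i j.
Proof.
move=> /is_diag_mxP HL; rewrite mxE (bigD1 i) //= big1 ?addr0 // => k nk.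
by rewrite HL ?mul0r // eq_sym.
Qed.

Lemma mul_ones (R : realFieldType) (p m : nat) (M : 'M[R]_(p, m)) i :
  (M *m ones R m) i 0 = \sum_k M i k.
Proof. by rewrite mxE; apply: eq_bigr => k _; rewrite mxE mulr1. Qed.

Lemma sum1B (R : realFieldType) (p : nat) (M : 'M[R]_p) i :
  \sum_k (1%:M - M) i k = 1 - \sum_k M i k.
Proof.
under eq_bigr do rewrite !mxE.
rewrite sumrB (bigD1 i) //= big1 ?addr0 ?eqxx //.
by move=> k nk; rewrite eq_sym (negbTE nk).
Qed.

Theorem lemma1 (R : realFieldType) (p ns q : nat)
  (Hp : (0 < p)%N) (Hns : (0 < ns)%N) (Hq : (0 < q)%N)
  (Y : 'M[R]_(p, q)) (Z : 'M[R]_(ns, q))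
  (B : 'M[R]_(p, ns)) (D : 'M[R]_p)
  (Hfit : (1%:M - D) *m Y = B *m Z)
  (Hrow : row_mx B D *m ones R (ns + p) = ones R p)
  (HB : mx_nonneg B) (HD : mx_nonneg D)
  (Lam : 'M[R]_p)
  (HLdiag : is_diag_mx Lam) (HLnn : mx_nonneg Lam)
  (B' : 'M[R]_(p, ns)) (D' : 'M[R]_p)
  (HB' : B' = Lam *m B)
  (HoffD' : offd D' = Lam *m offd D)
  (HdiagD' : diagv D' = ones R p - Lam *m (B *m ones R ns + offd D *m ones R p))
  (HdiagD'nn : mx_nonneg (diagv D')) :
  [/\ (1%:M - D') *m Y = B' *m Z,
      row_mx B' D' *m ones R (ns + p) = ones R p,
      mx_nonneg B' & mx_nonneg D'].
Proof.
have rowi : forall i, \sum_k B i k + \sum_k D i k = 1.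
  move=> i; have := congr1 (fun M : 'cV[R]_p => M i 0) Hrow.
  by rewrite mul_ones big_split_ord /= mxE; under eq_bigr do rewrite row_mxEl;
     under [X in _ + X]eq_bigr do rewrite row_mxEr.
have offi : forall i, (offd D *m ones R p) i 0 = \sum_k D i k - D i i.
  move=> i; rewrite mul_ones [X in _ = X - _](bigD1 i) //= (bigD1 i) //= !mxE eqxx add0r addrAC subrr add0r.
  by apply: eq_bigr => k /negbTE nk; rewrite mxE eq_sym nk.
have key : 1%:M - D' = Lam *m (1%:M - D).
  apply/matrixP => i j. rewrite diag_mulE // !mxE.
  case: (eqVneq i j) => [<-|nij] /=.
    have E : D' i i = (ones R p - Lam *m (B *m ones R ns + offd D *m ones R p)) i 0.
      by rewrite -HdiagD' mxE.
    rewrite E mxE [(- (Lam *m _)) i 0]mxE diag_mulE // [X in _ * X]mxE offi mul_ones mxE.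
    have -> : \sum_k B i k = 1 - \sum_k D i k by rewrite -(rowi i) addrK.
    by rewrite mulr1n; ring.
  have := congr1 (fun M : 'M[R]_p => M i j) HoffD'.
  by rewrite diag_mulE // !mxE (negbTE nij) => ->; rewrite mulr0n; ring.
split.
- by rewrite key -mulmxA Hfit HB' mulmxA.
- apply/matrixP => i j; rewrite (ord1 j) mul_ones big_split_ord /=.
  under eq_bigr do rewrite row_mxEl; under [X in _ + X]eq_bigr do rewrite row_mxEr.
  have K : \sum_k (1%:M - D') i k = Lam i i * \sum_k (1%:M - D) i k.
    by rewrite key mulr_sumr; apply: eq_bigr => k _; rewrite diag_mulE.
  rewrite !sum1B in K.
  have SD : \sum_k D i k = 1 - \sum_k B i k by rewrite -(rowi i) addrAC subrr add0r.
  rewrite SD in K.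
  rewrite mxE HB'; under eq_bigr do rewrite diag_mulE //.
  rewrite -mulr_sumr.
  have -> : \sum_k D' i k = 1 - Lam i i * \sum_k B i k.
    by move: K; rewrite subKr => <-; rewrite opprB addrC subrK.
  by rewrite addrC subrK.
- by move=> i j; rewrite HB' diag_mulE // mulr_ge0.
- move=> i j; case: (eqVneq i j) => [<-|nij].
    by have := HdiagD'nn i 0; rewrite mxE.
  have := congr1 (fun M : 'M[R]_p => M i j) HoffD'.
  by rewrite diag_mulE // !mxE (negbTE nij) => ->; rewrite mulr_ge0.
Qed.
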